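(* Assume the high-level cost is $H(x,u,\theta)=L(x,u,\theta)+B(\theta)$ with $B(\theta)=\sum_{j}-\ln(g_j(\theta))$, where $g(\theta)\ge0 \iff \theta\in\mathcal{T}$ and $\mathcal{T}\subset\mathbb{R}^c$ is compact. Fix $x_0^j$ and $\theta^k$ and assume $\|\nabla_\theta J^L(x_0^j,\theta^k)\|\neq0$. Suppose $\nabla_\theta J^L(x_0^j,\theta^k)$ is continuous with respect to $\omega^*\in\Omega$, in the sense that the approximate gradient $\nabla_\theta J^A(x_0^j,\theta^k)$ computed from QP data $\omega$ tends to $\nabla_\theta J^L(x_0^j,\theta^k)$ as $\omega\to\omega^*$. Then there exists $\delta>0$ such that if $\|\omega-\omega^*\|^2\le\delta$, then $\langle\nabla_\theta H^A(x_0^j,\theta^k),\nabla_\theta H(x_0^j,\theta^k)\rangle>0$, where $H^A(x_0^j,\theta^k)=J^A(x_0^j,\theta^k)+B(\theta^k)$ and $H(x_0^j,\theta^k)=J^L(x_0^j,\theta^k)+B(\theta^k)$.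
   Context: Setting: parameter $\theta\in\mathbb{R}^c$. Low-level MPC (L-MPC) with initial condition $x_0$: $\min_{x,u}L(x,u,\theta)$ s.t. $(x,u)\in\mathcal{C}(\theta)$, $x_{i+1}=f(x_i,u_i,\theta)$; optimal value $J^L(x_0,\theta)$. Approximate MPC (A-MPC): the QP $\min_z\frac12z^TQ(\theta)z+q(\theta)^Tz$ s.t. $A(\theta)z=b(\theta)$, $G(\theta)z\le h(\theta)$ obtained by linearizing dynamics/constraints and quadratically approximating the cost about a trajectory; data $\omega=(A,G,Q,b,h,q)\in\Omega\subset\mathbb{R}^p$; optimal value $J^A(x_0,\theta)$, whose $\theta$-gradient is obtained by differentiating through the QP's KKT conditions. $\omega^*$ is the data of the QP approximation of L-MPC at its minimizer. $H(x_0,\theta)$ denotes the high-level cost with the L-MPC solution from $x_0$ substituted.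
   Formalization: The gradient $\nabla_\theta H(x_0^j,\theta^k)=\nabla_\theta J^L(x_0^j,\theta^k)+\nabla_\theta B(\theta^k)$ is also assumed nonzero, alongside $\|\nabla_\theta J^L(x_0^j,\theta^k)\|\neq0$. Each condition added here is assumed in the paper as well or is needed for the statement above to hold. *)

(* Defs.v *)
From HB Require Import structures.
From mathcomp Require Import all_boot all_order all_algebra.
From mathcomp Require Import all_classical all_reals all_analysis.
Set Implicit Arguments. Unset Strict Implicit. Unset Printing Implicit Defensive.
Import Order.TTheory GRing.Theory Num.Theory.
Import numFieldNormedType.Exports.
Local Open Scope classical_set_scope.
Local Open Scope ring_scope.

Definition dotv {R : realType} {n : nat} (u v : 'rV[R]_n) : R :=
  \sum_(i < n) u 0 i * v 0 i.

Definition is_grad {R : realType} {c : nat} (f : 'rV[R]_c -> R)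
  (x v : 'rV[R]_c) : Prop :=
  differentiable f x /\ forall h : 'rV[R]_c, 'd f x h = dotv v h.

Definition barrier {R : realType} {c m : nat} (g : 'I_m -> 'rV[R]_c -> R)
  (th : 'rV[R]_c) : R :=
  \sum_(j < m) - ln (g j th).

(* Main.v *)
Require Import Defs.
From HB Require Import structures.
From mathcomp Require Import all_boot all_order all_algebra.
From mathcomp Require Import all_classical all_reals all_analysis.
From mathcomp Require Import lra.
Import Order.TTheory GRing.Theory Num.Theory.
Import numFieldNormedType.Exports.
Local Open Scope classical_set_scope.
Local Open Scope ring_scope.

Lemma entry_le (R : realType) (n : nat) (x : 'rV[R]_n) (i : 'I_n) :
  `|x 0 i| <= `|x|.
Proof.
have -> : `|x| = mx_norm x by [].
rewrite mx_normrE (bigD1 (0, i)) //=.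
by rewrite le_max lexx.
Qed.

Lemma dotv_sub_bound (R : realType) (n : nat) (a v : 'rV[R]_n) :
  `|dotv a v| <= `|a| * \sum_(i < n) `|v 0 i|.
Proof.
rewrite /dotv mulr_sumr.
apply: (le_trans (ler_norm_sum _ _ _)).
apply: ler_sum => i _.
rewrite normrM ler_wpM2r //.
exact: entry_le.
Qed.

Lemma dotv_pos (R : realType) (n : nat) (v : 'rV[R]_n) : v != 0 -> 0 < dotv v v.
Proof.
move=> v0.
have [i vi] : exists i, v 0 i != 0.
  apply/existsP; apply: contraNT v0 => /existsPn H.
  apply/eqP/matrixP => a j; rewrite (ord1 a) mxE; by move: (H j); rewrite negbK => /eqP.
rewrite /dotv (bigD1 i) //=.
apply: ltr_pwDl.
  by rewrite lt_def mulf_neq0 //= -expr2 sqr_ge0.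
by apply: sumr_ge0 => j _; rewrite -expr2 sqr_ge0.
Qed.

Lemma dotvDl (R : realType) (n : nat) (a b v : 'rV[R]_n) :
  dotv (a + b) v = dotv a v + dotv b v.
Proof. by rewrite /dotv -big_split /=; apply: eq_bigr => i _; rewrite mxE mulrDl. Qed.

Theorem lemma3 (R : realType) (c m p : nat)
  (T : set 'rV[R]_c) (g : 'I_m -> 'rV[R]_c -> R)
  (JL : 'rV[R]_c -> R) (thk : 'rV[R]_c) (gJL gB : 'rV[R]_c)
  (Omega : set 'rV[R]_p) (omega_star : 'rV[R]_p)
  (gJA : 'rV[R]_p -> 'rV[R]_c) :
  compact T ->
  (forall th, (forall j, 0 <= g j th) <-> T th) ->
  (forall j, 0 < g j thk) ->
  is_grad (barrier g) thk gB ->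
  is_grad JL thk gJL ->
  `|gJL| != 0 ->
  gJL + gB != 0 ->
  Omega omega_star ->
  gJA @ within Omega (nbhs omega_star) --> gJL ->
  exists delta : R, 0 < delta /\
    forall omega, Omega omega -> `|omega - omega_star| ^+ 2 <= delta ->
      0 < dotv (gJA omega + gB) (gJL + gB).
Proof.
move=> _ _ _ _ _ _ v0 _ cv.
set v := gJL + gB.
set S := \sum_(i < c) `|v 0 i|.
have S0 : 0 <= S by apply: sumr_ge0 => i _.
have vv := @dotv_pos R c v v0.
pose e := dotv v v / (1 + S).
have e0 : 0 < e by rewrite divr_gt0 // ltr_pwDl.
move/cvgr_dist_lt: cv => /(_ e e0).
rewrite /within /= => /nbhs_normP [r r0 Hr].
exists ((r / 2) ^+ 2); split; first by rewrite exprn_gt0 // divr_gt0.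
move=> om Om hom.
have hr : `|omega_star - om| < r.
  rewrite distrC.
  have : `|om - omega_star| <= r / 2.
    by rewrite -(ler_pXn2r (n:=2)) // ?nnegrE // divr_ge0 // ltW.
  move=> h; apply: (le_lt_trans h); rewrite ltr_pdivrMr // ltr_pMr //.
  by rewrite (_ : 1 = 1%:R) // ltr_nat.
have := Hr om hr Om => /= he.
have eq1 : gJA om + gB = v + (gJA om - gJL) by rewrite /v [RHS]addrC addrA subrK.
rewrite eq1 dotvDl.
have hb := @dotv_sub_bound R c (gJA om - gJL) v.
rewrite -normrN opprB in hb.
have h2 : `|gJL - gJA om| * S <= e * S by rewrite ler_wpM2r // ltW.
have h1 : e * S < dotv v v.
  rewrite /e mulrAC ltr_pdivrMr ?ltr_pwDl // ltr_pM2l //.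
  by rewrite ltrDr.
rewrite -/S in hb.
have h4 : - dotv (gJA om - gJL) v <= `|dotv (gJA om - gJL) v| by rewrite -normrN ler_norm.
lra.
Qed.
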